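(* Let $n\ge2$, let $X\subset\mathbb{R}^n$ be finite, let $\epsilon>0$ and $A\subset X$. If $r\in\mathbb{N}\cup\{0\}$, then $(\bar A)^r=\operatorname{int}(A)\cup(\partial A)^r$.
   Context: $\mathcal{Q}=\mathcal{Q}(\epsilon)$ is the collection of closed cubes $\{x\in\mathbb{R}^n: j_i\frac{\epsilon}{2\sqrt n}\le x_i\le (j_i+1)\frac{\epsilon}{2\sqrt n},\ i=1,\dots,n\}$, $j\in\mathbb{Z}^n$. For a cube $S\in\mathcal{Q}$ and integer $m\ge0$, $S^m=\{x\in\mathbb{R}^n:\max_i|x_i-s_i|\le m\frac{\epsilon}{2\sqrt n}\text{ for some }s\in S\}$. For $B\subset\mathbb{R}^n$, $\mathcal{I}(B)=\{S\in\mathcal{Q}: S\cap B\ne\emptyset\}$. A cube $S\in\mathcal{I}(A)$ is an interior cube of $A$ if $S^1\cap X\subset A$ and every cube $T\in\mathcal{Q}$ with $T\subset S^1$ lies in $\mathcal{I}(A)$; otherwise $S\in\mathcal{I}(A)$ is a boundary cube of $A$. $\operatorname{int}(A)$ is the union of the interior cubes of $A$, $\partial A$ is the union of the boundary cubes of $A$, and $\bar A=\operatorname{int}(A)\cup\partial A=\bigcup_{S\in\mathcal{I}(A)}S$. For $Y\subset\mathbb{R}^n$ and integer $N\ge0$, the $N$-extension is $Y^N=\bigcup_{S\in\mathcal{I}(Y)}S^N$. *)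

(* Defs.v *)
From HB Require Import structures.
From mathcomp Require Import all_boot all_order all_algebra.
From mathcomp Require Import boolp classical_sets functions cardinality reals.
Set Implicit Arguments. Unset Strict Implicit. Unset Printing Implicit Defensive.
Import Order.TTheory GRing.Theory Num.Theory.
Local Open Scope ring_scope.
Local Open Scope classical_set_scope.

(* Points of R^n are functions 'I_n -> R.  A cube of the grid Q(eps) is
   indexed by j : 'I_n -> int (j in Z^n). *)
Section Grid.
Variables (R : realType) (n : nat) (eps : R).

Definition side : R := eps / (2 * Num.sqrt (n%:R)).

Definition cube (j : 'I_n -> int) : set ('I_n -> R) :=
  [set x | forall i, (j i)%:~R * side <= x i /\ x i <= (j i + 1)%:~R * side].

Definition cube_ext (m : nat) (j : 'I_n -> int) : set ('I_n -> R) :=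
  [set x | exists s, cube j s /\ forall i, `|x i - s i| <= m%:R * side].

Definition meets (B : set ('I_n -> R)) (j : 'I_n -> int) : Prop :=
  cube j `&` B !=set0.

Definition interior_cube (X A : set ('I_n -> R)) (j : 'I_n -> int) : Prop :=
  meets A j /\ (cube_ext 1 j `&` X `<=` A) /\
  (forall k, cube k `<=` cube_ext 1 j -> meets A k).

Definition boundary_cube (X A : set ('I_n -> R)) (j : 'I_n -> int) : Prop :=
  meets A j /\ ~ interior_cube X A j.

Definition int_set (X A : set ('I_n -> R)) : set ('I_n -> R) :=
  \bigcup_(j in interior_cube X A) cube j.

Definition bd_set (X A : set ('I_n -> R)) : set ('I_n -> R) :=
  \bigcup_(j in boundary_cube X A) cube j.

Definition closure_set (A : set ('I_n -> R)) : set ('I_n -> R) :=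
  \bigcup_(j in meets A) cube j.

Definition extension (Y : set ('I_n -> R)) (N : nat) : set ('I_n -> R) :=
  \bigcup_(j in meets Y) cube_ext N j.
End Grid.

(* Main.v *)
Require Import Defs.
From HB Require Import structures.
From mathcomp Require Import all_boot all_order all_algebra.
From mathcomp Require Import boolp classical_sets functions cardinality reals.
From mathcomp Require Import zify ring lra.
Import Order.TTheory GRing.Theory Num.Theory.
Set Implicit Arguments. Unset Strict Implicit.
Local Open Scope ring_scope.
Local Open Scope classical_set_scope.

Lemma int_step (R : realType) (a b : int) :
  (a%:~R < b%:~R + 2 :> R) -> a%:~R <= b%:~R + 1 :> R.
Proof.
move=> h.
have h1 : (a < b + 2)%R by rewrite -(ltr_int R) intrD.
have h2 : (a <= b + 1)%R by lia.
by rewrite -(ler_int R) intrD in h2.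
Qed.

Lemma intrD1 (R : realType) (k : int) : ((k + 1)%:~R : R) = k%:~R + 1.
Proof. by rewrite intrD. Qed.

Lemma aux (R : realType) (a b s : R) : 0 < s -> a * s <= (b + 1) * s -> a * s < (b + 2) * s.
Proof.
move=> hs h.
have e2 : (b+1)*s = b*s + s by ring.
have e3 : (b+2)*s = b*s + s + s by ring.
rewrite e3; rewrite e2 in h; lra.
Qed.

Section S.
Variables (R : realType) (n : nat) (eps : R).
Hypothesis hs : 0 < side n eps.

Definition close (j k : 'I_n -> int) := forall l,
  (j l)%:~R <= (k l)%:~R + 1 :> R /\ (k l)%:~R <= (j l)%:~R + 1 :> R.

Lemma close_ext j k : close j k -> cube eps k `<=` cube_ext eps 1 j.
Proof.
move=> hc z hz.
exists (fun l => if z l < (j l)%:~R * side n eps then (j l)%:~R * side n eps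
   else if (j l + 1)%:~R * side n eps < z l then (j l + 1)%:~R * side n eps else z l).
split => l; have [h1 h2] := hc l; have [h3 h4] := hz l; move: h3 h4; rewrite !intrD1 /= => h3 h4.
- have e1 : (j l)%:~R * side n eps <= (k l)%:~R * side n eps + side n eps by nra.
  have e2 : (k l)%:~R * side n eps <= (j l)%:~R * side n eps + side n eps by nra.
  case: ifP => c1; first by nra.
  case: ifP => c2; first by nra.
  move/negbT: c1; move/negbT: c2; rewrite -!leNgt; nra.
- have e1 : (j l)%:~R * side n eps <= (k l)%:~R * side n eps + side n eps by nra.
  have e2 : (k l)%:~R * side n eps <= (j l)%:~R * side n eps + side n eps by nra.
  case: ifP => c1; first by rewrite ler_norml; nra.
  case: ifP => c2; first by rewrite ler_norml; nra.
  by rewrite subrr normr0 mul1r ltW.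
Qed.

Definition fl (p : 'I_n -> R) : 'I_n -> int := fun l => Num.floor (p l / side n eps).

Lemma fl_itv p l : (fl p l)%:~R * side n eps <= p l /\ p l < (fl p l + 1)%:~R * side n eps.
Proof.
have /andP[h1 h2] := floor_itv (p l / side n eps).
rewrite /fl; split.
- by rewrite -ler_pdivlMr.
- by rewrite -ltr_pdivrMr.
Qed.

Lemma cube_fl p : cube eps (fl p) p.
Proof. by move=> l; have [h1 h2] := fl_itv p l; split => //; apply: ltW. Qed.

Lemma close_fl p q : (forall l, `|p l - q l| <= side n eps) -> close (fl p) (fl q).
Proof.
move=> h l; have [h1 h2] := fl_itv p l; have [h3 h4] := fl_itv q l.
move: (h l); rewrite ler_norml => /andP[h5 h6].
move: h2 h4; rewrite !intrD1 => h2 h4.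
split; apply: int_step.
- have : (fl p l)%:~R * side n eps < ((fl q l)%:~R + 2) * side n eps by nra.
  by rewrite ltr_pM2r.
- have : (fl q l)%:~R * side n eps < ((fl p l)%:~R + 2) * side n eps by nra.
  by rewrite ltr_pM2r.
Qed.

Lemma close_cube_fl j p : cube eps j p -> close j (fl p).
Proof.
move=> h l; have [h1 h2] := fl_itv p l; have [h3 h4] := h l.
move: h2 h4; rewrite !intrD1 => h2 h4.
split; apply: int_step.
- have : (j l)%:~R * side n eps < ((fl p l)%:~R + 2) * side n eps by nra.
  by rewrite ltr_pM2r.
- have : (fl p l)%:~R * side n eps < ((j l)%:~R + 2) * side n eps by nra.
  by rewrite ltr_pM2r.
Qed.

Lemma close_meet j k y : cube eps j y -> cube eps k y -> close j k.
Proof.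
move=> h h' l; have [h1 h2] := h l; have [h3 h4] := h' l.
move: h2 h4; rewrite !intrD1 => h2 h4.
split; apply: int_step; rewrite -(ltr_pM2r hs).
- have H := @aux R ((j l)%:~R) ((k l)%:~R) (side n eps) hs (le_trans h1 h4). exact H.
- have H := @aux R ((k l)%:~R) ((j l)%:~R) (side n eps) hs (le_trans h3 h2). exact H.
Qed.

Lemma step_int X A c d : interior_cube eps X A c -> close c d ->
  ~ Defs.meets eps (bd_set eps X A) d -> interior_cube eps X A d.
Proof.
move=> [_ [_ hc]] hcd hnb.
have hA : Defs.meets eps A d by apply: hc; exact: close_ext.
apply: contrapT => hni; apply: hnb.
have hp : cube eps d (fun l => (d l)%:~R * side n eps).
  by move=> l; split => //; rewrite ler_pM2r // ler_int lerDl.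
exists (fun l => (d l)%:~R * side n eps); split => //.
by exists d.
Qed.
End S.

Lemma side_pos (R : realType) (n : nat) (eps : R) : (2 <= n)%N -> 0 < eps -> 0 < side n eps.
Proof.
move=> hn he; rewrite /side divr_gt0 // mulr_gt0 // sqrtr_gt0 ltr0n.
by apply: leq_trans hn.
Qed.

Theorem lemma4p3 (R : realType) (n : nat) (hn : (2 <= n)%N)
  (X : set ('I_n -> R)) (hX : finite_set X) (eps : R) (heps : 0 < eps)
  (A : set ('I_n -> R)) (hA : A `<=` X) (r : nat) :
  extension eps (closure_set eps A) r =
  int_set eps X A `|` extension eps (bd_set eps X A) r.
Proof.
have hs := side_pos hn heps.
apply/seteqP; split; last first.
  move=> x [[j hj hx]|[j hj hx]].
    exists j; last by exists x; split => // l; rewrite subrr normr0 mulr_ge0 // ltW.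
    exists x; split => //; exists j => //; exact: hj.1.
  exists j => //; case: hj => y [hy [k hk hky]].
  exists y; split => //; exists k => //; exact: hk.1.
move=> x [T [y [hyT [S hS hyS]]] [s [hsT hxs]]].
have [hbT|hnbT] := pselect (Defs.meets eps (bd_set eps X A) T).
  by right; exists T => //; exists s.
have hSi : interior_cube eps X A S.
  apply: contrapT => hni; apply: hnbT; exists y; split => //; exists S => //.
have hTi : interior_cube eps X A T.
  exact: (step_int hs hSi (close_meet hs hyS hyT) hnbT).
pose m : R := (r.+1)%:R.
have hm : 0 < m by rewrite ltr0n.
have hmE : m = r%:R + 1 by rewrite /m -natr1.
clearbody m.
pose p (i : nat) := fun l => s l + (i%:R / m) * (x l - s l).
have F1 : forall i l, `|p i l - p i.+1 l| <= side n eps.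
  move=> i l.
  have -> : p i l - p i.+1 l = - (x l - s l) / m.
    rewrite /p -natr1. ring.
  rewrite normrM normrN normfV (gtr0_norm hm) ler_pdivrMr //.
  have := hxs l; rewrite hmE; nra.
have F2 : forall i, (i <= r.+1)%N -> forall l, `|x l - p i l| <= r%:R * side n eps.
  move=> i hi l.
  have -> : x l - p i l = (1 - i%:R / m) * (x l - s l).
    rewrite /p; ring.
  have h1 : i%:R / m <= 1 by rewrite ler_pdivrMr // mul1r hmE natr1 ler_nat.
  have h2 : 0 <= i%:R / m by rewrite divr_ge0 // ltW.
  rewrite normrM ger0_norm ?subr_ge0 //.
  have h3 : 0 <= i%:R / m * `|x l - s l| by rewrite mulr_ge0. 
  have := hxs l; rewrite mulrBl mul1r; lra.
have F0 : p 0%N = s.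
  by apply/funext => l; rewrite /p mul0r mul0r addr0.
have Fe : p r.+1 = x.
  by apply/funext => l; rewrite /p -natr1 -hmE divff ?lt0r_neq0 // mul1r addrC subrK.
have Hb : forall i, (i <= r.+1)%N -> Defs.meets eps (bd_set eps X A) (fl eps (p i)) ->
    (int_set eps X A `|` extension eps (bd_set eps X A) r) x.
  move=> i hi hb; right; exists (fl eps (p i)) => //.
  exists (p i); split; first exact: cube_fl.
  by move=> l; apply: F2.
have Q : forall i, (i <= r.+1)%N ->
    (int_set eps X A `|` extension eps (bd_set eps X A) r) x \/
    interior_cube eps X A (fl eps (p i)).
  elim=> [|i IH] hi.
    have [hb|hnb] := pselect (Defs.meets eps (bd_set eps X A) (fl eps (p 0%N))).
      by left; apply: Hb hb.
    right; apply: (step_int hs hTi _ hnb).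
    by rewrite F0; apply: close_cube_fl.
  have [|hint] := IH (ltnW hi); first by left.
  have [hb|hnb] := pselect (Defs.meets eps (bd_set eps X A) (fl eps (p i.+1))).
    by left; apply: Hb hb.
  right; apply: (step_int hs hint _ hnb).
  by apply: (close_fl hs) => l; apply: F1.
have [//|hint] := Q r.+1 (leqnn _).
left; exists (fl eps (p r.+1)) => //.
by rewrite Fe; apply: cube_fl.
Qed.
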